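(* Consider the multi-queue bandit described in the context, with any problem instance $(\boldsymbol\lambda,\boldsymbol\mu)$ with a unique optimal matching, any $\alpha\in(0,1)$ and any $\alpha$-consistent policy, and let $D(\boldsymbol\mu)=\frac{\Delta}{\mathrm{KL}\left(\mu_{\min},\frac{\mu_{\max}+1}{2}\right)}$. There exist constants $\tau$ and $C$ such that for any $t>\tau$: (a) $\displaystyle 2\Delta\sum_{u\in[U]}\sum_{k\ne k^*_u}\mathbb{E}[T_{uk}(t)]\ge U(K-1)D(\boldsymbol\mu)\left((1-\alpha)\log t-\log(4KC)\right)$; (b) for any $u\in[U]$, $\displaystyle 2\Delta\sum_{k\ne k^*_u}\mathbb{E}[T_{uk}(t)]\ge(U-1)D(\boldsymbol\mu)\left((1-\alpha)\log t-\log(4KC)\right)$; (c) for any $u\in[U]$, $\displaystyle \Delta\sum_{k\in N}\mathbb{E}[T_{uk}(t)]\ge(K-U)D(\boldsymbol\mu)\left((1-\alpha)\log t-\log(4KC)\right)$, where $N=[K]\setminus\{k^*_1,\dots,k^*_U\}$ is the set of the $K-U$ servers that are optimal for no queue.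
   Context: Discrete-time system with $U$ queues and $K$ servers, $1\le U\le K$. Arrivals $A_u(t)\in\{0,1\}$ to queue $u$ are Bernoulli($\lambda_u$), and the service $R_{uk}(t)\in\{0,1\}$ that server $k$ offers queue $u$ at time $t$ is Bernoulli($\mu_{uk}$); all mutually independent and i.i.d. across slots. In each slot a policy schedules a matching between queues and servers (each server serves at most one queue, each queue at most one server), based only on past observations and independent internal randomness. $\kappa_u(t)$ is the server assigned to queue $u$ at time $t$ and $T_{uk}(t)=\sum_{s=1}^t\mathbf 1\{\kappa_u(s)=k\}$. Unique optimal matching: for each $u$, $\mu^*_u=\max_k\mu_{uk}$ is attained at a unique $k^*_u$, and $k^*_u\ne k^*_{u'}$ for $u\ne u'$; also $\lambda_u<\mu^*_u$. $\Delta=\min_{u,\,k\ne k^*_u}(\mu^*_u-\mu_{uk})$, $\mu_{\min}=\min_{u,k}\mu_{uk}$, $\mu_{\max}=\max_{u,k}\mu_{uk}$, $\mathrm{KL}(p,q)=p\log\frac pq+(1-p)\log\frac{1-p}{1-q}$. A policy is $\alpha$-consistent if for every problem instance satisfying these assumptions, $\mathbb{E}[T_{uk}(t)]=O(t^\alpha)$ for every $u$ and $k\ne k^*_u$. *)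

(* Defs.v *)
From mathcomp Require Import all_boot all_order all_algebra.
From mathcomp Require Import reals exp.
Set Implicit Arguments. Unset Strict Implicit. Unset Printing Implicit Defensive.
Import Order.TTheory GRing.Theory Num.Theory.
Local Open Scope ring_scope.

Section MultiQueue.
Variables (R : realType) (U K : nat).

(* A (full) schedule: queue u is served by server f u; a matching means
   f is injective (each server serves at most one queue). *)
Definition sched := {ffun 'I_U -> 'I_K}.
Definition is_matching (f : sched) : bool := injectiveb f.

(* Per-slot observation record:
   (arrivals A(s), schedule kappa(s), observed services R_{u,kappa_u(s)}(s)). *)
Definition rec := ({ffun 'I_U -> bool} * sched * {ffun 'I_U -> bool})%type.

Definition arr (r : rec) := r.1.1.
Definition kap (r : rec) := r.1.2.
Definition obs (r : rec) := r.2.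

(* A history is the list of past records, MOST RECENT FIRST. *)
Definition history := seq rec.

(* A (randomized, history-dependent) policy: given the past history, a
   probability distribution over schedules (matchings) for the current slot. *)
Definition policy := history -> {ffun sched -> R}.

Definition valid_policy (pi : policy) : Prop :=
  (forall h f, 0 <= pi h f) /\
  (forall h, \sum_(f : sched) pi h f = 1) /\
  (forall h f, ~~ is_matching f -> pi h f = 0).

Definition bern (p : R) (b : bool) : R := if b then p else 1 - p.

Definition step (lam : 'I_U -> R) (mu : 'I_U -> 'I_K -> R) (pi : policy)
    (h : history) (r : rec) : R :=
  pi h (kap r) * (\prod_(u < U) bern (lam u) (arr r u))
               * (\prod_(u < U) bern (mu u (kap r u)) (obs r u)).

Fixpoint hprob lam mu pi (h : history) : R :=
  match h with
  | [::] => 1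
  | r :: h' => hprob lam mu pi h' * step lam mu pi h' r
  end.

Definition Tcount (u : 'I_U) (k : 'I_K) (h : history) : nat :=
  count (fun r => kap r u == k) h.

Definition ET lam mu pi (t : nat) (u : 'I_U) (k : 'I_K) : R :=
  \sum_(h : t.-tuple rec) hprob lam mu pi h * (Tcount u k h)%:R.

Definition unique_opt (mu : 'I_U -> 'I_K -> R) (kstar : 'I_U -> 'I_K) : Prop :=
  (forall u k, k != kstar u -> mu u k < mu u (kstar u)) /\ injective kstar.

Definition valid_instance (lam : 'I_U -> R) (mu : 'I_U -> 'I_K -> R) : Prop :=
  (forall u, 0 <= lam u <= 1) /\ (forall u k, 0 <= mu u k <= 1) /\
  exists kstar, unique_opt mu kstar /\ (forall u, lam u < mu u (kstar u)).

Definition consistent (alpha : R) (pi : policy) : Prop :=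
  forall lam mu kstar, valid_instance lam mu -> unique_opt mu kstar ->
  forall u k, k != kstar u ->
  exists c : R, exists t0 : nat, forall t : nat, (t0 <= t)%N ->
    ET lam mu pi t u k <= c * powR (t%:R) alpha.

Definition Delta (mu : 'I_U -> 'I_K -> R) (kstar : 'I_U -> 'I_K) : R :=
  \big[Num.min/1]_(u : 'I_U) \big[Num.min/1]_(k : 'I_K | k != kstar u)
     (mu u (kstar u) - mu u k).

Definition mu_min (mu : 'I_U -> 'I_K -> R) : R :=
  \big[Num.min/1]_(u : 'I_U) \big[Num.min/1]_(k : 'I_K) mu u k.
Definition mu_max (mu : 'I_U -> 'I_K -> R) : R :=
  \big[Num.max/0]_(u : 'I_U) \big[Num.max/0]_(k : 'I_K) mu u k.

(* Bernoulli KL divergence; with ln 0 = 0 this realizes 0 log 0 = 0 *)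
Definition KL (p q : R) : R :=
  p * ln (p / q) + (1 - p) * ln ((1 - p) / (1 - q)).

(* D(mu) = Delta / KL(mu_min, (mu_max+1)/2); when mu_max = 1 the KL is +oo
   and D(mu) = 0. *)
Definition Dmu (mu : 'I_U -> 'I_K -> R) (kstar : 'I_U -> 'I_K) : R :=
  if mu_max mu < 1 then Delta mu kstar / KL (mu_min mu) ((mu_max mu + 1) / 2)
  else 0.

End MultiQueue.

(* Main.v *)
Require Import Defs.
From mathcomp Require Import all_boot all_order all_algebra.
From mathcomp Require Import reals exp.
From mathcomp Require Import ring lra.
Import Order.TTheory GRing.Theory Num.Theory.
Local Open Scope ring_scope.
Set Implicit Arguments. Unset Strict Implicit. Unset Printing Implicit Defensive.

Section Basic.
Variable R : realType.

Lemma bern_ge0 (p : R) b : 0 <= p <= 1 -> 0 <= bern p b.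
Proof. by case: b => /andP[h1 h2] /=; lra. Qed.

Lemma bern_sum (p : R) : \sum_(b : bool) bern p b = 1.
Proof. by rewrite big_bool /=; lra. Qed.

Lemma tuple_sumS (T : finType) n (F : n.+1.-tuple T -> R) :
  \sum_(h : n.+1.-tuple T) F h = \sum_(r : T) \sum_(h : n.-tuple T) F [tuple of r :: h].
Proof.
rewrite pair_bigA /=.
rewrite (reindex (fun p : T * n.-tuple T => [tuple of p.1 :: p.2])) //=.
exists (fun h : n.+1.-tuple T => (thead h, [tuple of behead h])) => [[x t] _|h _] /=.
  by rewrite theadE; congr pair; apply/val_inj.
by rewrite [RHS]tuple_eta; apply/val_inj.
Qed.

Variable I : finType.
Lemma prod_sum1 (F : I -> bool -> R) :
  (forall i, \sum_b F i b = 1) ->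
  \sum_(a : {ffun I -> bool}) \prod_i F i (a i) = 1.
Proof.
move=> h; rewrite -(bigA_distr_bigA F) /=.
by rewrite big1 // => i _; rewrite h.
Qed.

Lemma marg (F : I -> bool -> R) (v : I) (G : bool -> R) :
  \sum_(o : {ffun I -> bool}) (\prod_w F w (o w)) * G (o v) =
  (\sum_b F v b * G b) * \prod_(w | w != v) \sum_b F w b.
Proof.
pose F' w b := if w == v then F w b * G b else F w b.
transitivity (\sum_(o : {ffun I -> bool}) \prod_w F' w (o w)).
  apply: eq_bigr => o _.
  rewrite (bigD1 v) //= [in RHS](bigD1 v) //= /F' eqxx.
  rewrite mulrAC; congr (_ * _); apply: eq_bigr => w /negbTE ->; done.
rewrite -(bigA_distr_bigA F') /= (bigD1 v) //= /F' eqxx.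
congr (_ * _); apply: eq_bigr => w /negbTE -> //.
Qed.

End Basic.

Section Step.
Variables (R : realType) (U K : nat) (lam : 'I_U -> R) (pi : policy R U K).
Hypothesis hpi : valid_policy pi.
Hypothesis hlam : forall u, 0 <= lam u <= 1.

Definition PO (mu : 'I_U -> 'I_K -> R) (f : sched U K) (o : {ffun 'I_U -> bool}) :=
  \prod_u bern (mu u (f u)) (o u).

Lemma step_decomp mu h (G : sched U K -> {ffun 'I_U -> bool} -> R) :
  \sum_(r : rec U K) step lam mu pi h r * G (kap r) (obs r) =
  \sum_(f : sched U K) pi h f * \sum_(o : {ffun 'I_U -> bool}) PO mu f o * G f o.
Proof.
have E1 : forall H : rec U K -> R, \sum_(r : rec U K) H r =
   \sum_(a : {ffun 'I_U -> bool}) \sum_(f : sched U K) \sum_(o : {ffun 'I_U -> bool}) H (a, f, o).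
  move=> H.
  rewrite (eq_bigr (fun p => H (p.1, p.2))); last by case.
  rewrite -(pair_bigA _ (fun x o => H (x, o))) /=.
  rewrite (eq_bigr (fun x => \sum_o H ((x.1, x.2), o))); last by case.
  by rewrite -(pair_bigA _ (fun a f => \sum_o H ((a, f), o))) /=.
rewrite E1 exchange_big /=; apply: eq_bigr => f _.
transitivity (\sum_(a : {ffun 'I_U -> bool}) (\prod_u bern (lam u) (a u)) *
   (pi h f * \sum_(o : {ffun 'I_U -> bool}) PO mu f o * G f o)).
  apply: eq_bigr => a _; rewrite big_distrr big_distrr /=; apply: eq_bigr => o _.
  rewrite /step /kap /arr /obs /= /PO; ring.
by rewrite -big_distrl /= (prod_sum1 (fun u => bern_sum (lam u))) mul1r.
Qed.

Lemma PO_sum1 mu f : \sum_o PO mu f o = 1.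
Proof. exact: (prod_sum1 (fun u => bern_sum (mu u (f u)))). Qed.

Lemma step_sum1 mu h : \sum_(r : rec U K) step lam mu pi h r = 1.
Proof.
have E := step_decomp mu h (fun _ _ => 1).
rewrite -[LHS](eq_bigr _ (fun r _ => mulr1 (step lam mu pi h r))) E.
rewrite (eq_bigr (fun f => pi h f)); first by case: hpi => _ [->].
by move=> f _; rewrite (eq_bigr (fun o => PO mu f o)) ?PO_sum1 ?mulr1 // => o _; rewrite mulr1.
Qed.

Lemma step_ge0 mu h r : (forall u k, 0 <= mu u k <= 1) -> 0 <= step lam mu pi h r.
Proof.
move=> hmu; rewrite /step; apply: mulr_ge0; first apply: mulr_ge0.
- by case: hpi => -> _.
- by apply: prodr_ge0 => u _; apply: bern_ge0.
- by apply: prodr_ge0 => u _; apply: bern_ge0.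
Qed.

Lemma hprob_ge0 mu h : (forall u k, 0 <= mu u k <= 1) -> 0 <= hprob lam mu pi h.
Proof.
move=> hmu; elim: h => [|r h IH] /=; first exact: ler01.
by apply: mulr_ge0 => //; apply: step_ge0.
Qed.

Lemma tuple_sum0 (T : finType) (F : 0.-tuple T -> R) :
  \sum_(h : 0.-tuple T) F h = F [tuple].
Proof. by rewrite (big_pred1 [tuple]) // => h /=; rewrite [h]tuple0; apply/esym/eqP. Qed.

Lemma hprob_sum1 mu t : \sum_(h : t.-tuple (rec U K)) hprob lam mu pi h = 1.
Proof.
elim: t => [|t IH]; first by rewrite tuple_sum0.
rewrite tuple_sumS exchange_big /= -[RHS]IH; apply: eq_bigr => h _.
by rewrite -big_distrr /= step_sum1 mulr1.
Qed.

Lemma exp_slots mu (g1 g2 : rec U K -> R) :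
  (forall h, \sum_(r : rec U K) step lam mu pi h r * g1 r =
             \sum_(r : rec U K) step lam mu pi h r * g2 r) ->
  forall t, \sum_(h : t.-tuple (rec U K)) hprob lam mu pi h * \sum_(r <- h) g1 r =
            \sum_(h : t.-tuple (rec U K)) hprob lam mu pi h * \sum_(r <- h) g2 r.
Proof.
move=> hg; elim=> [|t IH]; first by rewrite !tuple_sum0 !big_nil.
have E : forall g : rec U K -> R,
  \sum_(h : t.+1.-tuple (rec U K)) hprob lam mu pi h * \sum_(r <- h) g r =
  \sum_(h : t.-tuple (rec U K)) hprob lam mu pi h *
     (\sum_(r : rec U K) step lam mu pi h r * g r) +
  \sum_(h : t.-tuple (rec U K)) hprob lam mu pi h * \sum_(r <- h) g r.
  move=> g; rewrite tuple_sumS exchange_big /= -big_split /=.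
  apply: eq_bigr => h _.
  set P := hprob lam mu pi h; set S := \sum_(r0 <- h) g r0.
  rewrite big_distrr /=.
  transitivity (\sum_(r : rec U K) (P * (step lam mu pi h r * g r) + P * S * step lam mu pi h r)).
    apply: eq_bigr => r _; rewrite big_cons /= -/S -/P; ring.
  by rewrite big_split /= -[in X in _ + X = _]big_distrr /= step_sum1 mulr1.
by rewrite !E IH; congr (_ + _); apply: eq_bigr => h _; rewrite hg.
Qed.

Lemma Tcount_sum (u : 'I_U) (k : 'I_K) (h : history U K) :
  (Tcount u k h)%:R = \sum_(r <- h) ((kap r u == k)%:R : R).
Proof.
elim: h => [|r h IH]; first by rewrite big_nil.
by rewrite big_cons /Tcount /= natrD -IH.
Qed.

Lemma sum_eq1 (T : finType) (x : T) : (\sum_(j : T) ((x == j) : nat) = 1)%N.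
Proof. by rewrite (bigD1 x) //= eqxx big1 // => j /negbTE; rewrite eq_sym => ->. Qed.

Lemma Tcount_total (u : 'I_U) (h : history U K) :
  (\sum_(j : 'I_K) Tcount u j h)%N = size h.
Proof.
elim: h => [|r h IH]; first by rewrite big1.
rewrite /Tcount /= big_split /= sum_eq1 add1n; congr S; exact: IH.
Qed.

Lemma sum_slots_kap (v : 'I_U) (F : 'I_K -> R) (h : history U K) :
  \sum_(r <- h) F (kap r v) = \sum_(j : 'I_K) F j * (Tcount v j h)%:R.
Proof.
elim: h => [|r h IH]; first by rewrite big_nil big1 // => j _; rewrite mulr0.
rewrite big_cons IH /Tcount /=.
under [RHS]eq_bigr do rewrite natrD mulrDr.
rewrite big_split /=; congr (_ + _).
rewrite (bigD1 (kap r v)) //= eqxx mulr1 big1 ?addr0 // => j /negbTE.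
by rewrite eq_sym => ->; rewrite mulr0.
Qed.

Lemma mul_gt0_inv (x y : R) : 0 <= x -> 0 <= y -> 0 < x * y -> 0 < x /\ 0 < y.
Proof.
move=> hx hy; rewrite !lt0r mulf_eq0 negb_or => /andP[/andP[nx ny] _].
by rewrite nx ny hx hy.
Qed.

Lemma prod_gt0_inv (F : 'I_U -> R) : (forall u, 0 <= F u) -> 0 < \prod_u F u -> forall u, 0 < F u.
Proof.
move=> hF hp u; rewrite lt0r hF andbT.
have : \prod_u F u != 0 by rewrite gt_eqF.
by move/prodf_neq0 => /(_ u isT).
Qed.

Lemma ln_prod (F : 'I_U -> R) : (forall u, 0 < F u) -> ln (\prod_u F u) = \sum_u ln (F u).
Proof.
move=> hF; rewrite /index_enum; elim: (Finite.enum _) => [|x s IH].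
  by rewrite !big_nil ln1.
rewrite !big_cons lnM ?IH // posrE //; exact: prodr_gt0.
Qed.

Definition lr (mu mu' : 'I_U -> 'I_K -> R) (r : rec U K) :=
  \sum_v ln (bern (mu v (kap r v)) (obs r v) / bern (mu' v (kap r v)) (obs r v)).
Definition kg (mu mu' : 'I_U -> 'I_K -> R) (r : rec U K) :=
  \sum_v KL (mu v (kap r v)) (mu' v (kap r v)).

Lemma bern_KL (p q : R) : \sum_b bern p b * ln (bern p b / bern q b) = KL p q.
Proof. by rewrite big_bool /KL /=. Qed.

Lemma cond_lr mu mu' h :
  \sum_(r : rec U K) step lam mu pi h r * lr mu mu' r =
  \sum_(r : rec U K) step lam mu pi h r * kg mu mu' r.
Proof.
have E1 := step_decomp mu h (fun f o => \sum_v ln (bern (mu v (f v)) (o v) / bern (mu' v (f v)) (o v))).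
have E2 := step_decomp mu h (fun f o => \sum_v KL (mu v (f v)) (mu' v (f v))).
rewrite /= in E1 E2; rewrite /lr /kg E1 E2; apply: eq_bigr => f _; congr (_ * _).
rewrite -big_distrl /= PO_sum1 mul1r.
under eq_bigr do rewrite big_distrr /=.
rewrite exchange_big /=; apply: eq_bigr => v _.
have := marg (fun w b => bern (mu w (f w)) b) v (fun b => ln (bern (mu v (f v)) b / bern (mu' v (f v)) b)).
rewrite /= => E; rewrite /PO E bern_KL big1 ?mulr1 // => w _; exact: bern_sum.
Qed.

Section Supp.
Variables (mu mu' : 'I_U -> 'I_K -> R).
Hypothesis hmu : forall u k, 0 <= mu u k <= 1.
Hypothesis hmu' : forall u k, 0 <= mu' u k <= 1.
Hypothesis hs : forall v j b, 0 < bern (mu v j) b -> 0 < bern (mu' v j) b.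

Lemma step_pos_inv h r : 0 < step lam mu pi h r ->
  [/\ 0 < pi h (kap r) * \prod_u bern (lam u) (arr r u), 0 < PO mu (kap r) (obs r)
    & 0 < PO mu' (kap r) (obs r)].
Proof.
move=> hst.
have h1 : 0 <= pi h (kap r) * \prod_u bern (lam u) (arr r u).
  apply: mulr_ge0; first by case: hpi => ->.
  by apply: prodr_ge0 => u _; apply: bern_ge0.
have h2 : 0 <= PO mu (kap r) (obs r) by apply: prodr_ge0 => u _; apply: bern_ge0.
have [g1 g2] := mul_gt0_inv h1 h2 hst.
split => //; apply: prodr_gt0 => u _; apply: hs.
by apply: (prod_gt0_inv _ g2) => w; apply: bern_ge0.
Qed.

Lemma hprob_pos h : 0 < hprob lam mu pi h -> 0 < hprob lam mu' pi h.
Proof.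
elim: h => [|r h IH] //= hp.
have [g1 g2] := mul_gt0_inv (hprob_ge0 h hmu) (step_ge0 h r hmu) hp.
have [a b c] := step_pos_inv g2.
by apply: mulr_gt0; [exact: IH | exact: (mulr_gt0 a c)].
Qed.

Lemma ln_ratio h : 0 < hprob lam mu pi h ->
  ln (hprob lam mu pi h / hprob lam mu' pi h) = \sum_(r <- h) lr mu mu' r.
Proof.
elim: h => [|r h IH] /= hp; first by rewrite big_nil divr1 ln1.
have [g1 g2] := mul_gt0_inv (hprob_ge0 h hmu) (step_ge0 h r hmu) hp.
have [a b c] := step_pos_inv g2.
have q1 := hprob_pos g1.
rewrite big_cons.
have -> : hprob lam mu pi h * step lam mu pi h r / (hprob lam mu' pi h * step lam mu' pi h r)
  = (hprob lam mu pi h / hprob lam mu' pi h) * (PO mu (kap r) (obs r) / PO mu' (kap r) (obs r)).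
  rewrite /step /PO; field.
  move: a c; rewrite /PO lt0r mulf_eq0 negb_or => /andP[/andP[n1 n2] _] c.
  by rewrite n1 n2 !gt_eqF.
rewrite lnM ?posrE ?divr_gt0 ?IH // addrC; congr (_ + _).
rewrite /PO -prodf_div ln_prod // => u; apply: divr_gt0.
  exact: (prod_gt0_inv (fun w => bern_ge0 _ (hmu _ _)) b).
exact: (prod_gt0_inv (fun w => bern_ge0 _ (hmu' _ _)) c).
Qed.

Lemma KL_hist t :
  \sum_(h : t.-tuple (rec U K)) hprob lam mu pi h * ln (hprob lam mu pi h / hprob lam mu' pi h)
  = \sum_v \sum_j KL (mu v j) (mu' v j) * ET lam mu pi t v j.
Proof.
transitivity (\sum_(h : t.-tuple (rec U K)) hprob lam mu pi h * \sum_(r <- h) lr mu mu' r).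
  apply: eq_bigr => h _; have := hprob_ge0 h hmu; rewrite le0r => /orP[/eqP ->|hp].
    by rewrite !mul0r.
  by rewrite ln_ratio.
rewrite (exp_slots (cond_lr mu mu')).
transitivity (\sum_(h : t.-tuple (rec U K)) \sum_v \sum_j
     KL (mu v j) (mu' v j) * (hprob lam mu pi h * (Tcount v j h)%:R)).
  apply: eq_bigr => h _; rewrite /kg exchange_big big_distrr /=; apply: eq_bigr => v _.
  rewrite (sum_slots_kap v (fun j => KL (mu v j) (mu' v j))) big_distrr /=.
  by apply: eq_bigr => j _; ring.
rewrite exchange_big /=; apply: eq_bigr => v _.
rewrite exchange_big /=; apply: eq_bigr => j _.
by rewrite /ET big_distrr.
Qed.

End Supp.

End Step.

Section RealLemmas.
Variable R : realType.
Implicit Types x y p q r : R.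

Lemma ln_le_sub1 y : 0 < y -> ln y <= y - 1.
Proof. move=> hy; have := @le_ln1Dx R (y - 1); have -> : 1 + (y - 1) = y by ring. by apply; lra. Qed.

Lemma plog_ge p q r : 0 <= p -> 0 <= q -> (0 < p -> 0 < q) -> 0 < r ->
  p * ln r + p - q * r <= p * ln (p / q).
Proof.
move=> hp hq hpq hr; have [->|p0] := eqVneq p 0.
  by rewrite !mul0r add0r subr_le0 mulr_ge0 // ltW.
have pp : 0 < p by rewrite lt0r p0.
have qp := hpq pp.
have := ln_le_sub1 (divr_gt0 (mulr_gt0 qp hr) pp).
have qrp : q * r \in Num.pos by rewrite posrE mulr_gt0.
have e1 : ln (q * r / p) = ln q + ln r - ln p.
  rewrite (ln_div qrp); last by rewrite posrE.
  by rewrite lnM // posrE.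
have e2 : ln (p / q) = ln p - ln q by rewrite ln_div // posrE.
rewrite e1 e2 => H.
have H2 : p * (ln q + ln r - ln p) <= p * (q * r / p - 1) by rewrite ler_pM2l.
have E : p * (q * r / p - 1) = q * r - p by field.
rewrite E in H2; lra.
Qed.

Lemma plog_ge2 p q : 0 <= p -> 0 <= q -> (0 < p -> 0 < q) -> p - q <= p * ln (p / q).
Proof. move=> hp hq hpq; have := plog_ge hp hq hpq ltr01; rewrite ln1 mulr0 mulr1 add0r //. Qed.

Lemma logsum (I : finType) (P : pred I) (p q : I -> R) :
  (forall i, 0 <= p i) -> (forall i, 0 <= q i) -> (forall i, 0 < p i -> 0 < q i) ->
  (\sum_(i | P i) p i) * ln ((\sum_(i | P i) p i) / (\sum_(i | P i) q i))
    <= \sum_(i | P i) p i * ln (p i / q i).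
Proof.
move=> hp hq hpq.
set Sp := \sum_(i | P i) p i; set Sq := \sum_(i | P i) q i.
have Sp0 : 0 <= Sp by apply: sumr_ge0.
have Sq0 : 0 <= Sq by apply: sumr_ge0.
have [Sp_eq|Sp_ne] := eqVneq Sp 0.
  rewrite Sp_eq mul0r; apply: sumr_ge0 => i Pi.
  have : p i = 0 by move/psumr_eq0P: Sp_eq => /(_ (fun i _ => hp i)); apply.
  by move=> ->; rewrite mul0r.
have Spp : 0 < Sp by rewrite lt0r Sp_ne.
have Sqp : 0 < Sq.
  rewrite lt0r Sq0 andbT; apply/negP => /eqP Sq_eq.
  move/negP: Sp_ne; apply; apply/eqP; apply: big1 => i Pi.
  have qi : q i = 0 by move/psumr_eq0P: Sq_eq => /(_ (fun i _ => hq i)); apply.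
  apply/eqP; rewrite eq_le hp andbT; apply/negP => /negP; rewrite -ltNge => /hpq.
  by rewrite qi ltxx.
have rp : 0 < Sp / Sq by apply: divr_gt0.
apply: le_trans (ler_sum _ (fun i _ => plog_ge (hp i) (hq i) (@hpq i) rp)).
set r := Sp / Sq.
have -> : \sum_(i | P i) (p i * ln r + p i - q i * r) = Sp * ln r + Sp - Sq * r.
  by rewrite big_split /= big_split /= sumrN -!big_distrl.
have -> : Sq * r = Sp by rewrite /r mulrC divfK // gt_eqF.
lra.
Qed.


Lemma logsum2 (a1 a2 b1 b2 : R) : 0 <= a1 -> 0 <= a2 -> 0 <= b1 -> 0 <= b2 ->
  (0 < a1 -> 0 < b1) -> (0 < a2 -> 0 < b2) ->
  (a1 + a2) * ln ((a1 + a2) / (b1 + b2)) <= a1 * ln (a1 / b1) + a2 * ln (a2 / b2).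
Proof.
move=> h1 h2 h3 h4 h5 h6.
have := @logsum _ xpredT (fun i : 'I_2 => if i == ord0 then a1 else a2)
   (fun i : 'I_2 => if i == ord0 then b1 else b2).
rewrite !big_ord_recr !big_ord0 /= !add0r; apply.
- by move=> i; case: ifP.
- by move=> i; case: ifP.
- by move=> i; case: ifP.
Qed.

Lemma KL_ge0 p q : 0 <= p <= 1 -> 0 < q < 1 -> 0 <= KL p q.
Proof.
move=> /andP[p0 p1] /andP[q0 q1]; rewrite /KL.
have A := @plog_ge2 p q p0 (ltW q0) (fun _ => q0).
have B := @plog_ge2 (1 - p) (1 - q) ltac:(lra) ltac:(lra) (fun _ => ltac:(lra)).
lra.
Qed.

Lemma KL_mono p0 p x : 0 <= p0 -> p0 <= p -> p < x -> x < 1 -> KL p x <= KL p0 x.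
Proof.
move=> h0 h1 h2 h3.
have [->|ne] := eqVneq p p0; first exact: lexx.
set th := (x - p) / (x - p0).
have xp0 : 0 < x - p0 by lra.
have th0 : 0 < th by apply: divr_gt0; lra.
have th1 : th <= 1 by rewrite ler_pdivrMr //; lra.
have Ep : p = th * p0 + (1 - th) * x by rewrite /th; field; lra.
have Eq : 1 - p = th * (1 - p0) + (1 - th) * (1 - x) by rewrite /th; field; lra.
have L1 := @logsum2 (th * p0) ((1 - th) * x) (th * x) ((1 - th) * x)
  ltac:(nra) ltac:(nra) ltac:(nra) ltac:(nra) (fun _ => ltac:(nra)) (fun _ => ltac:(nra)).
have L2 := @logsum2 (th * (1 - p0)) ((1 - th) * (1 - x)) (th * (1 - x)) ((1 - th) * (1 - x))
  ltac:(nra) ltac:(nra) ltac:(nra) ltac:(nra) (fun _ => ltac:(nra)) (fun _ => ltac:(nra)).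
have E1 : th * x + (1 - th) * x = x by ring.
have E2 : th * (1 - x) + (1 - th) * (1 - x) = 1 - x by ring.
rewrite -Ep E1 in L1; rewrite -Eq E2 in L2.
have E3 : th * p0 / (th * x) = p0 / x by field; lra.
have E4 : th * (1 - p0) / (th * (1 - x)) = (1 - p0) / (1 - x) by field; lra.
rewrite E3 in L1; rewrite E4 in L2.
have aa : forall a : R, a * ln (a / a) = 0.
  by move=> a; have [->|a0] := eqVneq a 0; [rewrite mul0r | rewrite divff // ln1 mulr0].
rewrite aa addr0 in L1; rewrite aa addr0 in L2.
have K0 := @KL_ge0 p0 x ltac:(lra) ltac:(lra).
rewrite /KL in K0 *.
have K1 : 0 <= (1 - th) * (p0 * ln (p0 / x) + (1 - p0) * ln ((1 - p0) / (1 - x))).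
  by apply: mulr_ge0 => //; lra.
lra.
Qed.

End RealLemmas.

Section Core.
Variables (R : realType) (U K : nat) (lam : 'I_U -> R) (pi : policy R U K).
Hypothesis hpi : valid_policy pi.
Hypothesis hlam : forall u, 0 <= lam u <= 1.

Definition Prob (mu : 'I_U -> 'I_K -> R) t (A : pred (t.-tuple (rec U K))) :=
  \sum_(h : t.-tuple (rec U K) | A h) hprob lam mu pi h.

Lemma Prob_ge0 mu t A : (forall u k, 0 <= mu u k <= 1) -> 0 <= @Prob mu t A.
Proof. by move=> hmu; apply: sumr_ge0 => h _; apply: hprob_ge0. Qed.

Lemma Prob_C mu t A : @Prob mu t (predC A) = 1 - Prob mu A.
Proof.
rewrite /Prob -(hprob_sum1 lam hpi mu t) [in RHS](bigID A) /=.
rewrite addrAC subrr add0r; apply: eq_bigl => h //.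
Qed.

Lemma Prob_le1 mu t A : (forall u k, 0 <= mu u k <= 1) -> @Prob mu t A <= 1.
Proof.
move=> hmu; have := Prob_ge0 (predC A) hmu; rewrite Prob_C; lra.
Qed.

Lemma ylog (y b : R) : 0 <= y -> (0 < y -> 0 < b) -> y * ln (1 / b) - 1 <= y * ln (y / b).
Proof.
move=> hy hyb; have [->|y0] := eqVneq y 0; first by rewrite !mul0r; lra.
have yp : 0 < y by rewrite lt0r y0.
have bp := hyb yp.
have -> : y / b = y * (1 / b) by rewrite mul1r.
rewrite lnM ?posrE ?divr_gt0 // mulrDr.
have := plog_ge2 (q := 1) hy ler01 (fun _ => ltr01); rewrite divr1; lra.
Qed.

Lemma change_of_measure (mu mu' : 'I_U -> 'I_K -> R) t (A : pred (t.-tuple (rec U K))) :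
  (forall u k, 0 <= mu u k <= 1) -> (forall u k, 0 <= mu' u k <= 1) ->
  (forall v j b, 0 < bern (mu v j) b -> 0 < bern (mu' v j) b) ->
  (1 - Prob mu A) * ln (1 / Prob mu' (predC A)) - 2 <=
  \sum_v \sum_j KL (mu v j) (mu' v j) * ET lam mu pi t v j.
Proof.
move=> hmu hmu' hs.
rewrite -(@KL_hist _ _ _ lam pi hpi hlam _ _ hmu hmu' hs) (bigID A) /=.
have H1 : -1 <= \sum_(h | A h) hprob lam mu pi h * ln (hprob lam mu pi h / hprob lam mu' pi h).
  have H0 : \sum_(h | A h) (hprob lam mu pi h - hprob lam mu' pi h) <=
     \sum_(h | A h) hprob lam mu pi h * ln (hprob lam mu pi h / hprob lam mu' pi h).
    apply: ler_sum => h _; apply: plog_ge2.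
    - exact: (@hprob_ge0 _ _ _ lam pi hpi hlam _ h hmu).
    - exact: (@hprob_ge0 _ _ _ lam pi hpi hlam _ h hmu').
    - exact: (@hprob_pos _ _ _ lam pi hpi hlam _ _ hmu hs).
  apply: le_trans H0.
  rewrite sumrB; have := Prob_ge0 A hmu; have := Prob_le1 A hmu'.
  rewrite /Prob; lra.
have H2 := @logsum R _ (predC A) (fun h : t.-tuple (rec U K) => hprob lam mu pi h)
   (fun h => hprob lam mu' pi h) (fun h => @hprob_ge0 _ _ _ lam pi hpi hlam _ h hmu) (fun h => @hprob_ge0 _ _ _ lam pi hpi hlam _ h hmu')
   (@hprob_pos _ _ _ lam pi hpi hlam _ _ hmu hs).
rewrite /= in H2.
have H3 := @ylog (Prob mu (predC A)) (Prob mu' (predC A)) (Prob_ge0 _ hmu).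
have H4 : 0 < Prob mu (predC A) -> 0 < Prob mu' (predC A).
  rewrite /Prob => hP.
  case: (pickP (fun h : t.-tuple (rec U K) => ~~ A h && (0 < hprob lam mu pi h))) => [h /andP[hA hh] | Hn]; last first.
    move: hP; rewrite lt0r => /andP[/negP hn _]; exfalso; apply: hn; apply/eqP; apply: big1 => h hA.
    have hA' : ~~ A h := hA.
    move: (Hn h); rewrite /= hA' /= => /negbT; rewrite -leNgt => hle.
    apply/eqP; rewrite eq_le hle (@hprob_ge0 _ _ _ lam pi hpi hlam _ h hmu) //.
  apply: lt_le_trans (@hprob_pos _ _ _ lam pi hpi hlam _ _ hmu hs h hh) _.
  rewrite (bigD1 h) //=; rewrite lerDl; apply: sumr_ge0 => h' _; exact: (@hprob_ge0 _ _ _ lam pi hpi hlam _ h' hmu').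
have H5 := H3 H4.
have H2' : Prob mu (predC A) * ln (Prob mu (predC A) / Prob mu' (predC A)) <=
  \sum_(i | ~~ A i) hprob lam mu pi i * ln (hprob lam mu pi i / hprob lam mu' pi i) := H2.
rewrite Prob_C in H5 H2'; rewrite /Prob in H5 H2' *.
lra.
Qed.

Lemma Prob_supp (mu mu' : 'I_U -> 'I_K -> R) t (B : pred (t.-tuple (rec U K))) :
  (forall u k, 0 <= mu u k <= 1) -> (forall u k, 0 <= mu' u k <= 1) ->
  (forall v j b, 0 < bern (mu v j) b -> 0 < bern (mu' v j) b) ->
  0 < Prob mu B -> 0 < Prob mu' B.
Proof.
move=> hmu hmu' hs; rewrite /Prob => hP.
case: (pickP (fun h : t.-tuple (rec U K) => B h && (0 < hprob lam mu pi h))) => [h /andP[hA hh] | Hn]; last first.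
  move: hP; rewrite lt0r => /andP[/negP hn _]; exfalso; apply: hn; apply/eqP; apply: big1 => h hA.
  move: (Hn h); rewrite /= hA /= => /negbT; rewrite -leNgt => hle.
  apply/eqP; rewrite eq_le hle (@hprob_ge0 _ _ _ lam pi hpi hlam _ h hmu) //.
apply: lt_le_trans (@hprob_pos _ _ _ lam pi hpi hlam _ _ hmu hs h hh) _.
rewrite (bigD1 h) //=; rewrite lerDl; apply: sumr_ge0 => h' _; exact: (@hprob_ge0 _ _ _ lam pi hpi hlam _ h' hmu').
Qed.

Lemma markov mu t (A : pred (t.-tuple (rec U K))) (X : t.-tuple (rec U K) -> R) (c : R) :
  (forall u k, 0 <= mu u k <= 1) -> 0 < c -> (forall h, 0 <= X h) -> (forall h, A h -> c <= X h) ->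
  Prob mu A <= (\sum_(h : t.-tuple (rec U K)) hprob lam mu pi h * X h) / c.
Proof.
move=> hmu hc hX hA; rewrite ler_pdivlMr // /Prob big_distrl /=.
apply: le_trans (_ : \sum_(h | A h) hprob lam mu pi h * X h <= _).
  apply: ler_sum => h Ah; apply: ler_wpM2l; [exact: (@hprob_ge0 _ _ _ lam pi hpi hlam _ h hmu) | exact: hA].
rewrite [X in _ <= X](bigID A) /= lerDl; apply: sumr_ge0 => h _.
by apply: mulr_ge0 => //; exact: (@hprob_ge0 _ _ _ lam pi hpi hlam _ h hmu).
Qed.

Lemma ET_sum mu t u (S : pred 'I_K) :
  \sum_(h : t.-tuple (rec U K)) hprob lam mu pi h * (\sum_(j | S j) ((Tcount u j h)%:R : R)) =
  \sum_(j | S j) ET lam mu pi t u j.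
Proof.
under eq_bigr do rewrite big_distrr /=.
by rewrite exchange_big.
Qed.

End Core.

Section Pow.
Variable R : realType.

Lemma powR_split (t a : R) : 0 < t -> t `^ a * t `^ (1 - a) = t.
Proof.
move=> ht; rewrite -powRD; last by apply/implyP => _; rewrite gt_eqF.
by rewrite addrC subrK powRr1 // ltW.
Qed.

Lemma ln_le_pow (t b : R) : 0 < t -> b * ln t <= t `^ b.
Proof. by move=> ht; rewrite -ln_powR; apply/ltW/ln_sublinear/powR_gt0. Qed.

End Pow.


Section Core2.
Variables (R : realType) (U K : nat) (lam : 'I_U -> R) (pi : policy R U K).
Hypothesis hpi : valid_policy pi.
Variable alpha : R.
Hypothesis halpha : 0 < alpha < 1.
Hypothesis hcons : consistent alpha pi.

Lemma core (mu mu' : 'I_U -> 'I_K -> R) kstar kstar' :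
  valid_instance lam mu -> unique_opt mu kstar ->
  valid_instance lam mu' -> unique_opt mu' kstar' ->
  (forall v j b, 0 < bern (mu v j) b -> 0 < bern (mu' v j) b) ->
  forall u, kstar' u != kstar u ->
  exists M : R, exists t0 : nat, forall t : nat, (t0 <= t)%N ->
    (1 - alpha) * ln t%:R - M <= \sum_v \sum_j KL (mu v j) (mu' v j) * ET lam mu pi t v j.
Proof.
move=> vi uo vi' uo' hs u hk.
have /andP[hal0 hal1] := halpha.
have hlam : forall u, 0 <= lam u <= 1 by case: vi.
have hmu : forall u k, 0 <= mu u k <= 1 by case: vi => _ [].
have hmu' : forall u k, 0 <= mu' u k <= 1 by case: vi' => _ [].
set k := kstar' u.
have [c1 [t1 H1]] := hcons vi uo hk.
have : forall j : 'I_K, exists p : R * nat, j != k -> forall t, (p.2 <= t)%N ->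
    ET lam mu' pi t u j <= p.1 * powR t%:R alpha.
  move=> j; case: (eqVneq j k) => [->|hj]; first by exists (0, 0%N) => /= //.
  have [c [t0 H]] := hcons vi' uo' hj.
  by exists (c, t0) => _.
case/fin_all_exists => F HF.
pose c : R := `|c1| + 1.
pose c' : R := \sum_j `|(F j).1| + 1.
have c1c : c1 <= c by rewrite /c; have := ler_norm c1; lra.
have c'1 : 1 <= c' by rewrite /c' lerDr; apply: sumr_ge0 => j _.
have c1' : 1 <= c by rewrite /c lerDr.
exists (ln (2 * c') + 2 * c + 2), (maxn 1 (maxn t1 (\max_j (F j).2))) => t ht.
have t_ge1 : (1 <= t)%N by apply: leq_trans ht; rewrite leq_maxl.
have t_ge_t1 : (t1 <= t)%N by apply: leq_trans ht; rewrite !leq_max leqnn !orbT.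
have t_ge_tj : forall j, ((F j).2 <= t)%N.
  by move=> j; apply: leq_trans ht; rewrite !leq_max (@leq_bigmax _ (fun j => (F j).2) j) !orbT.
set tR : R := t%:R.
have tR1 : 1 <= tR by rewrite /tR ler1n.
have tR0 : 0 < tR by lra.
set ta := powR tR alpha.
have ta0 : 0 < ta by apply: powR_gt0.
pose A := fun h : t.-tuple (rec U K) => (t <= 2 * Tcount u k h)%N.
have Ha : Prob lam pi mu A <= 2 * c * ta / tR.
  have := markov (A := A) (X := fun h => (Tcount u k h)%:R) (c := tR / 2) hpi hlam hmu.
  move=> /(_ ltac:(lra) (fun h => ler0n _ _)).
  have : forall h, A h -> tR / 2 <= (Tcount u k h)%:R.
    move=> h; rewrite /A -(ler_nat R) natrM /tR => H; lra.
  move=> H /(_ H).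
  rewrite -/(ET lam mu pi t u k) => H2.
  apply: le_trans H2 _.
  have := H1 t t_ge_t1; rewrite -/tR -/ta => H3.
  have : c1 * ta <= c * ta by apply: ler_wpM2r => //; exact: ltW.
  move=> H4; rewrite ler_pdivrMr //.
    have H3' : ET lam mu pi t u k <= c1 * ta := H3.
    have -> : 2 * c * ta / tR * (tR / 2) = c * ta by field; lra.
    lra.
  lra.
pose X := fun h : t.-tuple (rec U K) => \sum_(j | j != k) ((Tcount u j h)%:R : R).
have Xsum : forall h : t.-tuple (rec U K), (Tcount u k h)%:R + X h = tR.
  move=> h; have E : t = size h by rewrite size_tuple.
  rewrite /tR [in RHS]E -(Tcount_total u h) natr_sum (bigD1 k) //.
have X0 : forall h, 0 <= X h by move=> h; apply: sumr_ge0 => j _; exact: ler0n.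
have Hb : Prob lam pi mu' (predC A) <= 2 * c' * ta / tR.
  have := markov (A := predC A) (X := X) (c := tR / 2) hpi hlam hmu'.
  move=> /(_ ltac:(lra) X0).
  have : forall h, predC A h -> tR / 2 <= X h.
    move=> h; rewrite /= /A -ltnNge -(ltr_nat R) natrM /tR => H.
    have := Xsum h; rewrite /tR; lra.
  move=> H /(_ H).
  rewrite /X (ET_sum lam pi mu' t u (fun j => j != k)) => H2.
  apply: le_trans H2 _.
  have H3 : \sum_(j | j != k) ET lam mu' pi t u j <= c' * ta.
    apply: le_trans (_ : \sum_(j | j != k) `|(F j).1| * ta <= _).
      apply: ler_sum => j hj; apply: le_trans (HF j hj t (t_ge_tj j)) _.
      by apply: ler_wpM2r; [exact: ltW | exact: ler_norm].
    rewrite -big_distrl /= ler_wpM2r ?(ltW ta0) //.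
    apply: le_trans (_ : \sum_j `|(F j).1| <= _); last by rewrite /c' lerDl.
    rewrite [X in _ <= X](bigID (fun j => j != k)) /= lerDl; apply: sumr_ge0 => *; exact: normr_ge0.
  rewrite ler_pdivrMr; last by lra.
  have -> : 2 * c' * ta / tR * (tR / 2) = c' * ta by field; lra.
  exact: H3.
have Hcm := change_of_measure hpi hlam A hmu hmu' hs.
have a0 := Prob_ge0 hpi hlam A hmu.
have a1 := Prob_le1 hpi hlam A hmu.
set a := Prob lam pi mu A in Hcm Ha a0 a1.
set b := Prob lam pi mu' (predC A) in Hcm Hb.
have c'0 : 0 < c' by lra.
have Hlnb : (1 - a) * ((1 - alpha) * ln tR - ln (2 * c')) <= (1 - a) * ln (1 / b).
  have [->|ha1] := eqVneq a 1; first by rewrite subrr !mul0r.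
  have pa : 0 < 1 - a by rewrite subr_gt0 lt_neqAle ha1 a1.
  have bpos : 0 < b.
    apply: (Prob_supp hpi hlam hmu hmu' hs); rewrite (Prob_C lam hpi); exact: pa.
  apply: ler_wpM2l; first exact: ltW.
  have -> : (1 - alpha) * ln tR - ln (2 * c') = ln (tR / (2 * c' * ta)).
    have p2c : 0 < 2 * c' by lra.
    have pd : 0 < 2 * c' * ta by apply: mulr_gt0.
    rewrite ln_div ?posrE //.
    rewrite (@lnM _ (2 * c') ta) ?posrE //.
    rewrite /ta ln_powR; ring.
  have pd : 0 < 2 * c' * ta by apply: mulr_gt0 => //; lra.
  have p1 : tR / (2 * c' * ta) \in Num.pos by rewrite posrE divr_gt0.
  have p2 : 1 / b \in Num.pos by rewrite posrE divr_gt0.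
  rewrite ler_ln //.
  have -> : tR / (2 * c' * ta) = (2 * c' * ta / tR)^-1 by rewrite invf_div.
  by rewrite div1r lef_pV2 // posrE divr_gt0.
have Hat : a * ((1 - alpha) * ln tR) <= 2 * c.
  have L1 : 0 <= (1 - alpha) * ln tR by apply: mulr_ge0; [lra | exact: ln_ge0].
  have L2 := ln_le_pow (1 - alpha) tR0.
  apply: le_trans (_ : (2 * c * ta / tR) * tR `^ (1 - alpha) <= _).
    by apply: ler_pM.
  have := powR_split alpha tR0; rewrite -/ta => E.
  have -> : 2 * c * ta / tR * tR `^ (1 - alpha) = 2 * c * (ta * tR `^ (1 - alpha)) / tR by field; lra.
  rewrite E; have -> : 2 * c * tR / tR = 2 * c by field; lra.
  exact: lexx.
have Hl2 : 0 <= a * ln (2 * c') by apply: mulr_ge0 => //; apply: ln_ge0; lra.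
lra.
Qed.
End Core2.

Section Comb.
Variable R : realType.

Lemma sum_sub_le (I : finType) (P Q : pred I) (F : I -> R) :
  (forall i, P i -> Q i) -> (forall i, Q i -> 0 <= F i) ->
  \sum_(i | P i) F i <= \sum_(i | Q i) F i.
Proof.
move=> hPQ hF; rewrite [X in _ <= X](bigID P) /=.
have -> : \sum_(i | Q i && P i) F i = \sum_(i | P i) F i.
  by apply: eq_bigl => i; case hp: (P i); [rewrite (hPQ i hp) | rewrite andbF].
by rewrite lerDl; apply: sumr_ge0 => i /andP[hq _]; apply: hF.
Qed.

Definition sw (K : nat) (a b z : 'I_K) := if z == a then b else if z == b then a else z.

Lemma sw_invol K (a b z : 'I_K) : sw a b (sw a b z) = z.
Proof.
rewrite /sw; case: (eqVneq z a) => [->|za].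
  by case: (eqVneq b a) => [->|ba]; rewrite ?eqxx.
case: (eqVneq z b) => [->|zb]; first by rewrite eqxx.
by rewrite (negbTE za) (negbTE zb).
Qed.

Lemma sw_inj K (a b : 'I_K) : injective (sw a b).
Proof. exact: (can_inj (@sw_invol K a b)). Qed.

Lemma slot_ineq U K (f : 'I_U -> 'I_K) (u : 'I_U) (c : 'I_K) : injective f ->
  (\sum_(w | w != u) ((f w == c) : nat) <= \sum_(k | k != c) ((f u == k) : nat))%N.
Proof.
move=> finj.
case: (eqVneq (f u) c) => [fu|fu].
  rewrite big1 // => w wu; apply/eqP; rewrite eqb0; apply/eqP => fw.
  by move/eqP: wu; apply; apply: finj; rewrite fw fu.
rewrite (bigD1 (f u)) //= eqxx.
case: (pickP (fun w => (w != u) && (f w == c))) => [w0 /andP[w0u fw0]|Hn].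
  rewrite (bigD1 w0) //= fw0 big1 ?addn0 ?leq_addr // => w /andP[wu ww0].
  apply/eqP; rewrite eqb0; apply/eqP => fw; move/eqP: ww0; apply; apply: finj.
  by rewrite fw; apply/eqP; rewrite eq_sym.
rewrite big1 // => w wu; have := Hn w; rewrite /= wu /= => ->; done.
Qed.

Lemma hist_ineq U K (u : 'I_U) (c : 'I_K) (h : history U K) :
  all (fun r => is_matching (kap r)) h ->
  (\sum_(w | w != u) Tcount w c h <= \sum_(k | k != c) Tcount u k h)%N.
Proof.
elim: h => [|r h IH] /=; first by rewrite !big1.
move=> /andP[hm hall]; rewrite /Tcount /=.
rewrite !big_split /=; apply: leq_add; last exact: IH.
by apply: slot_ineq; apply/injectiveP.
Qed.

End Comb.

Section Match.
Variables (R : realType) (U K : nat) (lam : 'I_U -> R) (pi : policy R U K).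
Hypothesis hpi : valid_policy pi.
Hypothesis hlam : forall u, 0 <= lam u <= 1.

Lemma hprob_matching mu h : (forall u k, 0 <= mu u k <= 1) ->
  0 < hprob lam mu pi h -> all (fun r => is_matching (kap r)) h.
Proof.
move=> hmu; elim: h => [|r h IH] //= hp.
have [g1 g2] := mul_gt0_inv (@hprob_ge0 _ _ _ lam pi hpi hlam _ h hmu) (@step_ge0 _ _ _ lam pi hpi hlam _ h r hmu) hp.
rewrite IH // andbT.
apply/negPn/negP => nm.
move: g2; rewrite /step.
case: hpi => _ [_ H0]; rewrite (H0 _ _ nm) !mul0r ltxx //.
Qed.

Lemma ET_ge0 mu t u k : (forall u k, 0 <= mu u k <= 1) -> 0 <= ET lam mu pi t u k.
Proof.
move=> hmu; apply: sumr_ge0 => h _; apply: mulr_ge0; last exact: ler0n.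
exact: (@hprob_ge0 _ _ _ lam pi hpi hlam _ h hmu).
Qed.

Lemma S2 mu t (u : 'I_U) (c : 'I_K) : (forall u k, 0 <= mu u k <= 1) ->
  \sum_(w | w != u) ET lam mu pi t w c <= \sum_(k | k != c) ET lam mu pi t u k.
Proof.
move=> hmu; rewrite /ET exchange_big [X in _ <= X]exchange_big /=.
apply: ler_sum => h _; rewrite -!big_distrr /=.
have hp0 := @hprob_ge0 _ _ _ lam pi hpi hlam _ h hmu.
move: hp0; rewrite le0r => /orP[/eqP ->|hp]; first by rewrite !mul0r.
apply: ler_wpM2l; first exact: ltW.
rewrite -!natr_sum ler_nat; apply: hist_ineq.
exact: (hprob_matching hmu hp).
Qed.

End Match.

Section Alt.
Variables (R : realType) (U K : nat) (lam : 'I_U -> R) (mu : 'I_U -> 'I_K -> R) (kstar : 'I_U -> 'I_K).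
Hypothesis hinst : valid_instance lam mu.
Hypothesis hopt : unique_opt mu kstar.
Variables (m x : R).
Hypothesis hmax : forall v j, mu v j <= m.
Hypothesis hmx : m < x.
Hypothesis hx1 : x < 1.
Hypothesis hx0 : 0 < x.
Variables (u : 'I_U) (k : 'I_K).
Hypothesis hk : k != kstar u.

Definition ks' := fun v => sw (kstar u) k (kstar v).
Definition mu' := fun v j => if (j == ks' v) && (ks' v != kstar v) then x else mu v j.

Lemma lam_lt v : lam v < mu v (kstar v).
Proof.
case: hinst => _ [_ [k0 [[s0 i0] l0]]].
case: (eqVneq (k0 v) (kstar v)) => [<-|ne] //.
have := hopt.1 v _ ne; have := s0 v (kstar v); rewrite eq_sym => /(_ ne) H1 H2.
by move: (lt_trans H1 H2); rewrite ltxx.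
Qed.

Lemma ks'u : ks' u = k.
Proof. by rewrite /ks' /sw eqxx. Qed.

Lemma ks'_inj : injective ks'.
Proof. by move=> a b /sw_inj; apply: hopt.2. Qed.

Lemma mu'_diag v : mu' v (ks' v) = if ks' v != kstar v then x else mu v (ks' v).
Proof. by rewrite /mu' eqxx. Qed.

Lemma mu'_off v j : j != ks' v -> mu' v j = mu v j.
Proof. by rewrite /mu' => /negbTE ->. Qed.

Lemma alt_valid : [/\ valid_instance lam mu', unique_opt mu' ks',
   (forall v j b, 0 < bern (mu v j) b -> 0 < bern (mu' v j) b) & ks' u != kstar u].
Proof.
have hlam : forall u, 0 <= lam u <= 1 by case: hinst.
have hmu : forall u k, 0 <= mu u k <= 1 by case: hinst => _ [].
have uo' : unique_opt mu' ks'.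
  split; last exact: ks'_inj.
  move=> v j hj; rewrite mu'_diag mu'_off //.
  case: ifP => [_|/negbT]; last rewrite negbK => /eqP e; first exact: le_lt_trans (hmax v j) hmx.
  rewrite e; apply: hopt.1; by rewrite -e.
split => //.
- split => //; split.
    move=> v j; rewrite /mu'; case: ifP => _; last exact: hmu.
    by apply/andP; split; apply: ltW.
  exists ks'; split => // v; rewrite mu'_diag; case: ifP => [_|/negbT]; last rewrite negbK => /eqP ->.
    apply: lt_trans (lam_lt v) _; exact: le_lt_trans (hmax _ _) hmx.
  exact: lam_lt.
- move=> v j b; rewrite /mu'; case: ifP => // _ _.
  by rewrite /bern; case: b; [exact: hx0 | rewrite subr_gt0].
- by rewrite ks'u.
Qed.

Lemma KL_same (p : R) : KL p p = 0.
Proof.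
have aa : forall a : R, a * ln (a / a) = 0.
  by move=> a; have [->|a0] := eqVneq a 0; [rewrite mul0r | rewrite divff // ln1 mulr0].
by rewrite /KL !aa addr0.
Qed.

Lemma ks'_other v : v != u -> ks' v = if kstar v == k then kstar u else kstar v.
Proof.
move=> vu; rewrite /ks' /sw.
have -> : (kstar v == kstar u) = false.
  by apply/negbTE; apply: contra vu => /eqP /hopt.2 ->.
done.
Qed.

Lemma alt_upper (pi : policy R U K) t (kap : R) :
  (forall v j, KL (mu v j) x <= kap) -> (forall v j, 0 <= ET lam mu pi t v j) ->
  \sum_v \sum_j KL (mu v j) (mu' v j) * ET lam mu pi t v j <=
  kap * (ET lam mu pi t u k + \sum_(v | (v != u) && (kstar v == k)) ET lam mu pi t v (kstar u)).
Proof.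
move=> hkap hET.
have step1 : forall v, \sum_j KL (mu v j) (mu' v j) * ET lam mu pi t v j =
    if ks' v != kstar v then KL (mu v (ks' v)) x * ET lam mu pi t v (ks' v) else 0.
  move=> v; rewrite (bigD1 (ks' v)) //= big1 ?addr0 => [|j hj]; last first.
    by rewrite mu'_off // KL_same mul0r.
  by rewrite mu'_diag; case: ifP => // _; rewrite KL_same mul0r.
under eq_bigr do rewrite step1.
apply: le_trans (_ : \sum_v (if ks' v != kstar v then kap * ET lam mu pi t v (ks' v) else 0) <= _).
  apply: ler_sum => v _; case: ifP => // _; apply: ler_wpM2r; [exact: hET | exact: hkap].
rewrite (bigD1 u) //= ks'u hk mulrDr lerD2l big_mkcondr big_distrr /=.
apply: ler_sum => v vu; rewrite (ks'_other vu).
case: (eqVneq (kstar v) k) => [e|ne]; first by rewrite e eq_sym hk.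
by rewrite eqxx mulr0.
Qed.

End Alt.

Lemma S3 (R : realType) U K (kstar : 'I_U -> 'I_K) (u : 'I_U) (F : 'I_K -> R) :
  injective kstar -> (forall k, 0 <= F k) ->
  \sum_(k | [forall v, kstar v != k]) F k + \sum_(w | w != u) F (kstar w)
    <= \sum_(k | k != kstar u) F k.
Proof.
move=> kinj hF.
set img := kstar @: [set w | w != u].
have E : \sum_(w | w != u) F (kstar w) = \sum_(k in img) F k.
  rewrite big_imset /=; last by move=> a b _ _; apply: kinj.
  by apply: eq_bigl => w; rewrite inE.
rewrite E [X in _ <= X](bigID (mem img)) /= addrC; apply: lerD.
  apply: sum_sub_le => [k /forallP kN|k _]; last exact: hF.
  apply/andP; split; first by have := kN u; rewrite eq_sym.
  by apply/negP; rewrite /img => /imsetP [w _ e]; move: (kN w); rewrite e eqxx.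
apply: sum_sub_le => [k kin|k _ ]; last exact: hF.
apply/andP; split => //; move: kin; rewrite /img => /imsetP [w]; rewrite inE => wu ->.
by apply: contra wu => /eqP /kinj ->.
Qed.

Unset Implicit Arguments.

Theorem corollary4 (R : realType) (U K : nat) (hU : (1 <= U)%N) (hUK : (U <= K)%N)
    (lam : 'I_U -> R) (mu : 'I_U -> 'I_K -> R) (kstar : 'I_U -> 'I_K)
    (hinst : valid_instance lam mu) (hopt : unique_opt mu kstar)
    (alpha : R) (halpha : 0 < alpha < 1)
    (pi : policy R U K) (hpi : valid_policy pi) (hcons : consistent alpha pi) :
  exists (tau : nat) (C : R), 0 < C /\
  forall t : nat, (tau < t)%N ->
   let L := (1 - alpha) * ln (t%:R) - ln (4 * K%:R * C) in
   (* (a) *)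
   (U * (K - 1))%:R * Dmu mu kstar * L
     <= 2 * Delta mu kstar *
        \sum_(u < U) \sum_(k < K | k != kstar u) ET lam mu pi t u k
   /\
   (* (b) *)
   (forall u : 'I_U,
     (U - 1)%:R * Dmu mu kstar * L
       <= 2 * Delta mu kstar * \sum_(k < K | k != kstar u) ET lam mu pi t u k)
   /\
   (* (c) *)
   (forall u : 'I_U,
     (K - U)%:R * Dmu mu kstar * L
       <= Delta mu kstar *
          \sum_(k < K | [forall v : 'I_U, kstar v != k]) ET lam mu pi t u k).
Proof.
have hlam : forall u, 0 <= lam u <= 1 by case: hinst.
have hmu : forall u k, 0 <= mu u k <= 1 by case: hinst => _ [].
have [hstrict kinj] := hopt.
have /andP[ha0 ha1] := halpha.
have hET : forall t v j, 0 <= ET lam mu pi t v j by move=> t v j; apply: (ET_ge0 hpi hlam t v j hmu).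
have Dge0 : 0 <= Delta mu kstar.
  apply: le_bigmin => [|v _]; first exact: ler01.
  apply: le_bigmin => [|j hj]; first exact: ler01.
  by rewrite subr_ge0 ltW // hstrict.
have sge0 : forall t (u : 'I_U) (P : pred 'I_K), 0 <= \sum_(k | P k) ET lam mu pi t u k.
  by move=> t u P; apply: sumr_ge0 => k _; apply: hET.
have ssge0 : forall t, 0 <= \sum_(u < U) \sum_(k < K | k != kstar u) ET lam mu pi t u k.
  by move=> t; apply: sumr_ge0 => u _; apply: sge0.
case hm : (mu_max mu < 1); last first.
  exists 0%N, 1; split => // t _ /=.
  rewrite /Dmu hm !mulr0 !mul0r.
  split; [|split] => [|u|u].
  - by apply: mulr_ge0 => //; apply: mulr_ge0.
  - by apply: mulr_ge0 => //; apply: mulr_ge0.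
  - by apply: mulr_ge0.
set m := mu_max mu.
have hm' : m < 1 by rewrite /m hm.
have mmax : forall v j, mu v j <= m.
  move=> v j; apply: le_trans (le_bigmax 0 (fun k => mu v k) j) _.
  exact: (le_bigmax 0 (fun v => \big[Num.max/0]_k mu v k) v).
have mmin : forall v j, mu_min mu <= mu v j.
  move=> v j; apply: le_trans _ (bigmin_le 1 j (fun k => mu v k)).
  exact: (bigmin_le 1 v (fun v => \big[Num.min/1]_k mu v k)).
have mmin0 : 0 <= mu_min mu.
  apply: le_bigmin => [|v _]; first exact: ler01.
  apply: le_bigmin => [|j _]; first exact: ler01.
  by case/andP: (hmu v j).
have mmin1 : mu_min mu <= 1 by apply: bigmin_le_id.
have m0 : 0 <= m by apply: bigmax_ge_id.
set x := (m + 1) / 2.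
have hmx : m < x by rewrite /x; lra.
have hx1 : x < 1 by rewrite /x; lra.
have hx0 : 0 < x by rewrite /x; lra.
set kap := KL (mu_min mu) x.
have kap0 : 0 <= kap by apply: KL_ge0; apply/andP; split => //.
have hkapb : forall v j, KL (mu v j) x <= kap.
  move=> v j; apply: KL_mono => //; exact: le_lt_trans (mmax v j) hmx.
have Hp : forall p : 'I_U * 'I_K, exists Mt : R * nat, p.2 != kstar p.1 -> forall t, (Mt.2 <= t)%N ->
   (1 - alpha) * ln t%:R - Mt.1 <= kap * (ET lam mu pi t p.1 p.2 +
      \sum_(v | (v != p.1) && (kstar v == p.2)) ET lam mu pi t v (kstar p.1)).
  move=> [u k] /=; case: (eqVneq k (kstar u)) => [e|hk].
    by exists (0, 0%N) => /= //.
  have [vi' uo' hs' hk'] := alt_valid hinst hopt mmax hmx hx1 hx0 hk.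
  have [M [t0 HM]] := core hpi halpha hcons hinst hopt vi' uo' hs' hk'.
  exists (M, t0) => _ t ht /=; apply: le_trans (HM t ht) _.
  by apply: alt_upper.
case/fin_all_exists: Hp => G HG.
set Mx := \sum_p `|(G p).1|.
have KR : 0 < K%:R :> R by rewrite ltr0n (leq_trans hU hUK).
exists (\max_p (G p).2), (2 `^ (Mx / ln 2) / (4 * K%:R)).
split; first by apply: divr_gt0; [apply: powR_gt0; lra | lra].
move=> t ht L.
have lnC : ln (4 * K%:R * (2 `^ (Mx / ln 2) / (4 * K%:R))) = Mx.
  rewrite mulrC divfK; last by rewrite gt_eqF //; lra.
  have l2 : 0 < ln (2 : R) by apply: ln_gt0; lra.
  by rewrite ln_powR divfK // gt_eqF.
have HL : forall p : 'I_U * 'I_K, p.2 != kstar p.1 -> L <= kap * (ET lam mu pi t p.1 p.2 +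
      \sum_(v | (v != p.1) && (kstar v == p.2)) ET lam mu pi t v (kstar p.1)).
  move=> p hp; apply: le_trans (HG p hp t _); last first.
    exact: leq_trans (@leq_bigmax _ (fun p => (G p).2) p) (ltnW ht).
  rewrite /L lnC.
  have : (G p).1 <= Mx.
    apply: le_trans (ler_norm _) _; rewrite /Mx (bigD1 p) //= lerDl.
    by apply: sumr_ge0 => *; exact: normr_ge0.
  lra.
have Hc : forall u n, [forall v, kstar v != n] -> L <= kap * ET lam mu pi t u n.
  move=> u n /forallP hn.
  have hnu : n != kstar u by rewrite eq_sym; exact: hn u.
  have := HL (u, n) hnu; rewrite /= big1 ?addr0 // => v /andP[_ /eqP e].
  by move: (hn v); rewrite e eqxx.
have Hb : forall u w, w != u -> L <= kap * (ET lam mu pi t u (kstar w) + ET lam mu pi t w (kstar u)).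
  move=> u w wu; have hk : kstar w != kstar u by apply: contra wu => /eqP /kinj ->.
  have := HL (u, kstar w) hk; rewrite /= (big_pred1 w) // => v /=.
  apply/idP/eqP => [/andP[_ /eqP /kinj //]|->]; by rewrite wu eqxx.
have Dm : Dmu mu kstar = Delta mu kstar / kap by rewrite /Dmu hm.
rewrite Dm; set Dl := Delta mu kstar.
have [k0|kne] := eqVneq kap 0.
  rewrite k0 invr0 !mulr0 !mul0r.
  split; [|split] => [|u|u].
  - by apply: mulr_ge0 => //; apply: mulr_ge0.
  - by apply: mulr_ge0 => //; apply: mulr_ge0.
  - by apply: mulr_ge0.
have kpos : 0 < kap by rewrite lt0r kne kap0.
have scale : forall (c S : R), c * L <= kap * S -> c * (Dl / kap) * L <= Dl * S.
  move=> c S H.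
  have -> : c * (Dl / kap) * L = (Dl / kap) * (c * L) by ring.
  have -> : Dl * S = (Dl / kap) * (kap * S) by field; rewrite gt_eqF.
  by apply: ler_wpM2l => //; apply: divr_ge0 => //; exact: ltW.
have cardN : #|[pred n : 'I_K | [forall v, kstar v != n]]| = (K - U)%N.
  have E : [pred n : 'I_K | [forall v, kstar v != n]] =i ~: (kstar @: [set: 'I_U]).
    move=> n; rewrite !inE; apply/forallP/negP => [H /imsetP [v _ e]|H v].
      by move: (H v); rewrite e eqxx.
    by apply/eqP => e; apply: H; apply/imsetP; exists v => //; rewrite e.
  rewrite (eq_card E).
  have := cardsC (kstar @: [set: 'I_U]); rewrite card_imset // cardsT => H.
  have hK : #|'I_K| = K := card_ord K.
  have hU' : #|'I_U| = U := card_ord U.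
  rewrite hK hU' in H; move/(congr1 (fun n => (n - U)%N)): H; rewrite addKn //.
have cardU : forall u0 : 'I_U, #|[pred w : 'I_U | w != u0]| = (U - 1)%N.
  move=> u0; have := cardC1 u0; rewrite card_ord subn1 => <-.
  by apply: eq_card => w; rewrite !inE.
have sum_const : forall (I : finType) (P : pred I) (c : R), \sum_(i | P i) c = #|P|%:R * c.
  move=> I P c; have -> : \sum_(i | P i) c = \sum_(i in P) c by apply: eq_bigl.
  by rewrite sumr_const mulr_natl.
pose A u := \sum_(n | [forall v, kstar v != n]) ET lam mu pi t u n.
pose B u := \sum_(w | w != u) ET lam mu pi t u (kstar w).
pose Cc u := \sum_(w | w != u) ET lam mu pi t w (kstar u).
pose T u := \sum_(k | k != kstar u) ET lam mu pi t u k.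
have hA : forall u, (K - U)%:R * L <= kap * A u.
  move=> u; rewrite /A big_distrr /= -cardN -sum_const.
  by apply: ler_sum => n hn; exact: Hc.
have hBC : forall u, (U - 1)%:R * L <= kap * (B u + Cc u).
  move=> u; rewrite /B /Cc -big_split /= big_distrr /= -(cardU u) -sum_const.
  by apply: ler_sum => w wu; exact: Hb.
have hS3 : forall u, A u + B u <= T u.
  by move=> u; apply: S3 => // k; apply: hET.
have hB : forall u, B u <= T u.
  move=> u; have h1 := hS3 u; have h2 : 0 <= A u by apply: sge0.
  lra.
have hC : forall u, Cc u <= T u by move=> u; exact: (S2 hpi hlam t u (kstar u) hmu).
split; [|split] => [|u|u].
- have -> : 2 * Dl * \sum_(u < U) \sum_(k < K | k != kstar u) ET lam mu pi t u k =
      Dl * (2 * \sum_(u < U) T u) by rewrite /T; ring.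
  apply: scale.
  case: (lerP L 0) => [Lle|Lgt].
    apply: le_trans (_ : 0 <= _); first by apply: mulr_ge0_le0.
    by apply: mulr_ge0; [exact: ltW | apply: mulr_ge0 => //; apply: ssge0].
  have sA : U%:R * ((K - U)%:R * L) <= kap * \sum_u A u.
    by rewrite big_distrr /= -[U in U%:R](card_ord U) -sum_const; apply: ler_sum => u _; exact: hA.
  have sBC : U%:R * ((U - 1)%:R * L) <= kap * (\sum_u B u + \sum_u Cc u).
    rewrite -big_split big_distrr /= -[U in U%:R](card_ord U) -sum_const.
    by apply: ler_sum => u _; exact: hBC.
  have hsym : \sum_u Cc u = \sum_u B u.
    rewrite /Cc /B.
    rewrite (eq_bigr (fun u => \sum_w (if w != u then ET lam mu pi t w (kstar u) else 0))); last first.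
      by move=> u _; rewrite big_mkcond.
    rewrite exchange_big /=; apply: eq_bigr => w _; rewrite big_mkcond /= [RHS]big_mkcond /=.
    by apply: eq_bigr => i _; rewrite eq_sym.
  have sT : kap * (\sum_u A u + \sum_u B u) <= kap * (\sum_(u < U) T u).
    apply: ler_wpM2l; first exact: ltW.
    by rewrite -big_split; apply: ler_sum => u _; exact: hS3.
  have pos : 0 <= U%:R * (K%:R - U%:R) * L.
    apply: mulr_ge0; last exact: ltW.
    by apply: mulr_ge0 => //; rewrite subr_ge0 ler_nat.
  rewrite hsym in sBC.
  have hK1 : (1 <= K)%N := leq_trans hU hUK.
  rewrite natrB // in sA; rewrite natrB // in sBC.
  rewrite natrM natrB //.
  rewrite /T in sT; lra.
- have H2 : B u <= T u := hB u.
  have H3 : Cc u <= T u := hC u.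
  have := hBC u => H1.
  have H4 : (U - 1)%:R * L <= kap * (2 * T u).
    apply: le_trans H1 _; apply: ler_wpM2l; [exact: ltW | lra].
  have -> : 2 * Dl * \sum_(k < K | k != kstar u) ET lam mu pi t u k = Dl * (2 * T u) by rewrite /T; ring.
  exact: scale.
- exact: scale (hA u).
Qed.
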